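(* Let $a_1,\dots,a_N$ be pairwise distinct nonzero complex numbers. The eigenvalues of $\mathbf{S}_a$ are $a_1,\dots,a_N$. Define $N\times N$ matrices $\mathbf{D}_a=(d_{i,j})$ and $\mathbf{E}_a=(e_{i,j})$ by, for $i\ge j$, $$d_{i,j}=\frac{a_i}{a_N}\prod_{k=i+1}^{N}\Big(1-\frac{a_k}{a_j}\Big),\qquad e_{i,j}=\frac{a_N}{a_i}\prod_{\substack{k=j\\k\ne i}}^{N}\frac{1}{1-\frac{a_k}{a_i}},$$ and $d_{i,j}=e_{i,j}=0$ for $i<j$. Then for each $j$, the column $(d_{1,j},\dots,d_{N,j})^T$ is an eigenvector of $\mathbf{S}_a$ with eigenvalue $a_j$; moreover $\mathbf{D}_a^{-1}=\mathbf{E}_a$, so that $$\mathbf{S}_a=\mathbf{D}_a\,\mathrm{diag}(a_1,\dots,a_N)\,\mathbf{E}_a,\quad\text{and hence}\quad \mathbf{S}_a^k=\mathbf{D}_a\,\mathrm{diag}(a_1^k,\dots,a_N^k)\,\mathbf{E}_a\ \text{ for all integers }k\ge 1.$$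
   Context: For a sequence $a=(a_1,\dots,a_N)$ of complex numbers, $\mathbf{S}_a$ denotes the $N\times N$ matrix with $(\mathbf{S}_a)_{i,j}=a_i$ if $i\ge j$ and $0$ otherwise. $\mathrm{diag}(x_1,\dots,x_N)$ is the diagonal matrix with diagonal entries $x_1,\dots,x_N$. *)

(* Defs.v *)
From HB Require Import structures.
From mathcomp Require Import all_boot all_order all_algebra.
Set Implicit Arguments. Unset Strict Implicit. Unset Printing Implicit Defensive.
Import Order.TTheory GRing.Theory Num.Theory.
Local Open Scope ring_scope.

(* Indices 1..N are represented by 'I_N with N = n.+1 (0-based); a_N = a ord_max. *)

Definition S_mx (F : fieldType) (n : nat) (a : 'I_n.+1 -> F) : 'M[F]_n.+1 :=
  \matrix_(i, j) if (j <= i)%N then a i else 0.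

Definition D_mx (F : fieldType) (n : nat) (a : 'I_n.+1 -> F) : 'M[F]_n.+1 :=
  \matrix_(i, j) if (j <= i)%N then
      a i / a ord_max * \prod_(k : 'I_n.+1 | (i < k)%N) (1 - a k / a j)
    else 0.

Definition E_mx (F : fieldType) (n : nat) (a : 'I_n.+1 -> F) : 'M[F]_n.+1 :=
  \matrix_(i, j) if (j <= i)%N then
      a ord_max / a i * \prod_(k : 'I_n.+1 | (j <= k)%N && (k != i)) (1 - a k / a i)^-1
    else 0.

Definition diagN (F : fieldType) (n : nat) (x : 'I_n.+1 -> F) : 'M[F]_n.+1 :=
  diag_mx (\row_i x i).

(* Main.v *)
Require Import Defs.
From HB Require Import structures.
From mathcomp Require Import all_boot all_order all_algebra.
From mathcomp Require Import zify ring.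
Import Order.TTheory GRing.Theory Num.Theory.
Local Open Scope ring_scope.

Section Helpers.
Variables (F : fieldType) (n : nat) (a : 'I_n.+1 -> F).
Hypothesis ha0 : forall i, a i != 0.
Hypothesis hinj : injective a.

Lemma one_sub_neq0 (k l : 'I_n.+1) : k != l -> 1 - a k / a l != 0.
Proof.
move=> kl; apply/eqP => h.
have : a k = a l.
  apply/eqP; rewrite -subr_eq0.
  have -> : a k - a l = - (a l) * (1 - a k / a l) by field; exact: ha0.
  by rewrite h mulr0.
by move/hinj => e; rewrite e eqxx in kl.
Qed.

Lemma sum_split_top (G : 'I_n.+1 -> F) (j i : nat) : (i.+1 <= n)%N ->
  \sum_(m : 'I_n.+1 | (j <= m <= i.+1)%N) G m =
  \sum_(m : 'I_n.+1 | (j <= m <= i)%N) G m +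
    (if (j <= i.+1)%N then G (inord i.+1) else 0).
Proof.
move=> hi.
case: ifP => hj.
  rewrite (bigD1 (inord i.+1)) /=; last by rewrite inordK ?ltnS // hj leqnn.
  rewrite addrC; congr (_ + _); apply: eq_bigl => m.
  rewrite -val_eqE /= inordK ?ltnS //.
  lia.
rewrite addr0; apply: eq_bigl => m.
move/negbT: hj; lia.
Qed.

Lemma sum_split_bot (G : 'I_n.+1 -> F) (j : 'I_n.+1) (i : nat) : (j <= i)%N ->
  \sum_(m : 'I_n.+1 | (j <= m <= i)%N) G m =
  G j + \sum_(m : 'I_n.+1 | (j.+1 <= m <= i)%N) G m.
Proof.
move=> hj; rewrite (bigD1 j) /=; last by rewrite leqnn hj.
congr (_ + _); apply: eq_bigl => m; rewrite -val_eqE /=; lia.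
Qed.

Lemma prod_split_lt (f : 'I_n.+1 -> F) (m : nat) : (m < n)%N ->
  \prod_(k : 'I_n.+1 | (m < k)%N) f k =
  f (inord m.+1) * \prod_(k : 'I_n.+1 | (m.+1 < k)%N) f k.
Proof.
move=> hm; rewrite (bigD1 (inord m.+1)) /=; last by rewrite inordK ?ltnS.
congr (_ * _); apply: eq_bigl => k; rewrite -val_eqE /= inordK ?ltnS //; lia.
Qed.

Lemma prod_split_ne (f : 'I_n.+1 -> F) (j i : 'I_n.+1) : j != i ->
  \prod_(k : 'I_n.+1 | (j <= k)%N && (k != i)) f k =
  f j * \prod_(k : 'I_n.+1 | (j.+1 <= k)%N && (k != i)) f k.
Proof.
move=> hji; rewrite (bigD1 j) /=; last by rewrite leqnn hji.
congr (_ * _); apply: eq_bigl => k; rewrite -!val_eqE /=.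
move: hji; rewrite -val_eqE /=; lia.
Qed.

Lemma sumD (j : 'I_n.+1) (i : nat) : (i <= n)%N ->
  \sum_(m : 'I_n.+1 | (j <= m <= i)%N)
     a m * \prod_(k : 'I_n.+1 | (m < k)%N) (1 - a k / a j) =
  if (j <= i)%N then a j * \prod_(k : 'I_n.+1 | (i < k)%N) (1 - a k / a j)
  else 0.
Proof.
elim: i => [_|i IH hi].
  case: ifP => hj.
    have j0 : nat_of_ord j = 0%N by move: hj; lia.
    rewrite (big_pred1 j) => [|m]; first by rewrite j0.
    by rewrite /= -val_eqE /= j0; lia.
  rewrite big_pred0 // => m; move/negbT: hj; lia.
rewrite sum_split_top // IH ?(ltnW hi) //.
case: (ltngtP j i.+1) => hj.
- rewrite ltnS in hj; rewrite hj (prod_split_lt _ _ hi) inordK ?ltnS //.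
  have := ha0 j; move: (\prod_(_ | _) _) => P hj0; field; exact: hj0.
- have -> : (j <= i)%N = false by lia.
  by rewrite addr0.
- have -> : (j <= i)%N = false by lia.
  have -> : inord i.+1 = j by apply: val_inj; rewrite /= inordK ?ltnS.
  by rewrite add0r hj.
Qed.

Lemma sumE (i : 'I_n.+1) (d : nat) (j : 'I_n.+1) : (j + d)%N = i ->
  \sum_(m : 'I_n.+1 | (j <= m <= i)%N)
     a m * \prod_(k : 'I_n.+1 | (m <= k)%N && (k != i)) (1 - a k / a i)^-1 =
  a i * \prod_(k : 'I_n.+1 | (j <= k)%N && (k != i)) (1 - a k / a i)^-1.
Proof.
elim: d j => [|d IH] j hd.
  have ji : j = i by apply: val_inj; rewrite /= -hd addn0.
  subst j; rewrite (big_pred1 i) //= => m; rewrite /= -val_eqE /=; lia.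
have hjn : (j.+1 < n.+1)%N by have := ltn_ord i; lia.
have hji : j != i by rewrite -val_eqE /=; lia.
rewrite sum_split_bot; last by lia.
rewrite -[in X in _ + X](inordK hjn) IH; last by rewrite inordK //; lia.
rewrite (prod_split_ne _ _ _ hji) inordK //.
have := one_sub_neq0 _ _ hji; have := ha0 i.
move: (\prod_(_ | _) _) => P hi hx.
field; rewrite hi /=; apply: contra hx => /eqP h.
by apply/eqP; rewrite -[1](divff hi) -mulrBl h mul0r.
Qed.

Lemma SD : S_mx a *m D_mx a = D_mx a *m diagN a.
Proof.
apply/matrixP => i j; rewrite /S_mx /D_mx mul_mx_diag !mxE.
under eq_bigr do rewrite !mxE.
transitivity (\sum_(m : 'I_n.+1 | (j <= m <= i)%N)
   a i / a ord_max * (a m * \prod_(k : 'I_n.+1 | (m < k)%N) (1 - a k / a j))).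
  rewrite [RHS]big_mkcond; apply: eq_bigr => m _.
  case: (leqP m i) => hmi; case: (leqP j m) => hjm /=; rewrite ?mul0r ?mulr0 //.
  by move: (\prod_(_ | _) _) => P; ring.
rewrite -mulr_sumr sumD; last by rewrite -ltnS.
case: ifP => hji; last by rewrite mulr0 mul0r.
by move: (\prod_(_ | _) _) => P; ring.
Qed.

Lemma ES : E_mx a *m S_mx a = diagN a *m E_mx a.
Proof.
apply/matrixP => i j; rewrite /S_mx /E_mx mul_diag_mx !mxE.
under eq_bigr do rewrite !mxE.
transitivity (\sum_(m : 'I_n.+1 | (j <= m <= i)%N)
   a ord_max / a i * (a m * \prod_(k : 'I_n.+1 | (m <= k)%N && (k != i))
        (1 - a k / a i)^-1)).
  rewrite [RHS]big_mkcond; apply: eq_bigr => m _.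
  case: (leqP m i) => hmi; case: (leqP j m) => hjm /=; rewrite ?mul0r ?mulr0 //.
  by move: (\prod_(_ | _) _) => P; ring.
case: (leqP j i) => hji; last first.
  by rewrite big_pred0 ?mulr0 // => m; lia.
rewrite -mulr_sumr (sumE i (i - j)%N j); last by lia.
have := ha0 i; move: (\prod_(_ | _) _) => P hi; field; exact: hi.
Qed.

Lemma Pneq0 (j : 'I_n.+1) :
  \prod_(k : 'I_n.+1 | (j < k)%N) (1 - a k / a j) != 0.
Proof.
apply/prodf_neq0 => k hk; apply: one_sub_neq0.
by rewrite -val_eqE /=; move: hk; lia.
Qed.

Lemma Dii_neq0 (j : 'I_n.+1) : D_mx a j j != 0.
Proof.
rewrite /D_mx mxE leqnn; apply: mulf_neq0; last exact: Pneq0.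
by apply: mulf_neq0; rewrite ?invr_eq0 ha0.
Qed.

Lemma comm_diag (M : 'M[F]_n.+1) : M *m diagN a = diagN a *m M ->
  forall i j, i != j -> M i j = 0.
Proof.
move=> h i j hij; have := congr1 (fun M : 'M[F]_n.+1 => M i j) h.
rewrite /diagN mul_mx_diag mul_diag_mx !mxE => /eqP.
rewrite mulrC -subr_eq0 -mulrBl mulf_eq0 => /orP [|/eqP //].
rewrite subr_eq0 => /eqP /hinj e; by rewrite e eqxx in hij.
Qed.

Lemma ED : E_mx a *m D_mx a = 1%:M.
Proof.
have h : (E_mx a *m D_mx a) *m diagN a = diagN a *m (E_mx a *m D_mx a).
  by rewrite -mulmxA -SD mulmxA ES -mulmxA.
apply/matrixP => i j; rewrite [RHS]mxE.
case: (eqVneq i j) => [<-|hij]; last by rewrite (comm_diag _ h _ _ hij).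
rewrite mxE (bigD1 i) //= big1 ?addr0; last first.
  move=> m hm; rewrite /E_mx /D_mx !mxE.
  case: (leqP m i) => h1; case: (leqP i m) => h2; rewrite ?mul0r ?mulr0 //.
  by move: hm; rewrite -val_eqE /=; lia.
rewrite /E_mx /D_mx !mxE leqnn /=.
have -> : \prod_(k : 'I_n.+1 | (i <= k)%N && (k != i)) (1 - a k / a i)^-1 =
          (\prod_(k : 'I_n.+1 | (i < k)%N) (1 - a k / a i))^-1.
  rewrite prodfV; congr (_^-1); apply: eq_bigl => k; rewrite -val_eqE /=; lia.
have := Pneq0 i; have := ha0 i; have := ha0 ord_max.
move: (\prod_(_ | _) _) => P hN hi hP; field.
by rewrite hN hi hP.
Qed.

End Helpers.

Theorem proposition2p2 (C : numClosedFieldType) (n : nat) (a : 'I_n.+1 -> C)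
    (ha0 : forall i, a i != 0) (hinj : injective a) :
  (forall x : C, eigenvalue (S_mx a) x <-> exists i, x = a i) /\
  (forall j : 'I_n.+1,
      col j (D_mx a) != 0 /\ S_mx a *m col j (D_mx a) = a j *: col j (D_mx a)) /\
  (D_mx a \in unitmx /\ invmx (D_mx a) = E_mx a) /\
  S_mx a = D_mx a *m diagN a *m E_mx a /\
  (forall k : nat, (0 < k)%N ->
      S_mx a ^+ k = D_mx a *m diagN (fun i => a i ^+ k) *m E_mx a).
Proof.
have sd := @SD _ _ a ha0.
have ed := @ED _ _ a ha0 hinj.
have dnz := @Dii_neq0 _ _ a ha0 hinj.
have [_ uD] := mulmx1_unit ed.
have inv : invmx (D_mx a) = E_mx a by rewrite -[invmx _]mul1mx -ed mulmxK.
have de : D_mx a *m E_mx a = 1%:M by rewrite -inv mulmxV.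
have sde : S_mx a = D_mx a *m diagN a *m E_mx a.
  by rewrite -sd -mulmxA de mulmx1.
split.
  move=> x; rewrite eigenvalue_root_char char_poly_trig; last first.
    by apply/is_trig_mxP => i j hij; rewrite /S_mx mxE leqNgt hij.
  rewrite /root horner_prod /S_mx.
  under eq_bigr do rewrite hornerXsubC mxE leqnn.
  split => [/prodf_eq0 [i _]|[i ->]].
    by rewrite subr_eq0 => /eqP ->; exists i.
  by apply/prodf_eq0; exists i => //; rewrite subrr.
split.
  move=> j; split.
    apply/eqP => h; have := congr1 (fun M : 'cV[C]_n.+1 => M j 0) h.
    rewrite !mxE => e; by move: (dnz j); rewrite /D_mx mxE e eqxx.
  rewrite !colE mulmxA sd -mulmxA.
  have -> : diagN a *m (delta_mx j 0 : 'cV[C]_n.+1) = a j *: delta_mx j 0.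
    apply/matrixP => i k; rewrite /diagN mul_diag_mx !mxE.
    by case: (eqVneq i j) => [->|h]; rewrite ?mulr0 ?mulr1 // mulr0n mul0r.
  by rewrite scalemxAr.
split; first by [].
split; first by [].
have pw : forall k, S_mx a ^+ k.+1 = D_mx a *m diagN (fun i => a i ^+ k.+1) *m E_mx a.
  elim=> [|k IH].
    rewrite expr1 {1}sde; congr (_ *m _ *m _).
  rewrite exprSr IH {1}sde -mulmxE.
  rewrite -!mulmxA (mulmxA (E_mx a)) ed mul1mx !mulmxA.
  rewrite -[D_mx a *m _ *m diagN a]mulmxA; congr (_ *m _ *m _).
  rewrite /diagN mul_diag_mx; apply/matrixP => i j; rewrite !mxE mulrnAr.
  by rewrite -exprSr.
by case=> [//|k] _; exact: pw.
Qed.
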